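(* For every finite multiset $\Gamma$ of IMLL formulas and formula $\varphi$: if $\Gamma\Vdash\varphi$, then $\Gamma\vdash\varphi$ (derivable in NIMLL).
   Context: Fix a countably infinite set $\mathbb{A}$ of atoms. IMLL formulas: $\varphi::= p\in\mathbb{A}\mid\varphi\otimes\varphi\mid \mathrm{I}\mid\varphi\multimap\varphi$. Collections are finite multisets; ''$,$'' denotes multiset union, $\emptyset$ the empty multiset. NIMLL is the sequent-style natural deduction system with rules: (ax) $\varphi\triangleright\varphi$; ($\multimap$I) from $\Gamma,\varphi\triangleright\psi$ infer $\Gamma\triangleright\varphi\multimap\psi$; ($\multimap$E) from $\Gamma\triangleright\varphi\multimap\psi$ and $\Delta\triangleright\varphi$ infer $\Gamma,\Delta\triangleright\psi$; ($\mathrm{I}$I) $\emptyset\triangleright\mathrm{I}$; ($\mathrm{I}$E) from $\Gamma\triangleright\varphi$ and $\Delta\triangleright\mathrm{I}$ infer $\Gamma,\Delta\triangleright\varphi$; ($\otimes$I) from $\Gamma\triangleright\varphi$ and $\Delta\triangleright\psi$ infer $\Gamma,\Delta\triangleright\varphi\otimes\psi$; ($\otimes$E) from $\Gamma\triangleright\varphi\otimes\psi$ and $\Delta,\varphi,\psi\triangleright\chi$ infer $\Gamma,\Delta\triangleright\chi$. $\Gamma\vdash\varphi$ means $\Gamma\triangleright\varphi$ is derivable. An atomic rule is $(P_1\triangleright p_1,\dots,P_n\triangleright p_n)\Rightarrow p$ ($n\ge0$, $P_i$ finite multisets of atoms); a base is a set of atomic rules. Derivability $\vdash_{\mathscr{B}}$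 is the least relation with (Ref) $[p]\vdash_{\mathscr{B}}p$; (App) if $(P_1\triangleright p_1,\dots,P_n\triangleright p_n)\Rightarrow p\in\mathscr{B}$ and $S_i,P_i\vdash_{\mathscr{B}}p_i$ for all $i$, then $S_1,\dots,S_n\vdash_{\mathscr{B}}p$. Support: (At) $\Vdash^{P}_{\mathscr{B}}p$ iff $P\vdash_{\mathscr{B}}p$; ($\otimes$) $\Vdash^{P}_{\mathscr{B}}\varphi\otimes\psi$ iff for every $\mathscr{X}\supseteq\mathscr{B}$, multiset of atoms $U$, atom $p$, if $\varphi,\psi\Vdash^{U}_{\mathscr{X}}p$ then $\Vdash^{P,U}_{\mathscr{X}}p$; ($\mathrm{I}$) $\Vdash^{P}_{\mathscr{B}}\mathrm{I}$ iff for every $\mathscr{X}\supseteq\mathscr{B}$, $U$, $p$, if $\Vdash^{U}_{\mathscr{X}}p$ then $\Vdash^{P,U}_{\mathscr{X}}p$; ($\multimap$) $\Vdash^{P}_{\mathscr{B}}\varphi\multimap\psi$ iff $\varphi\Vdash^{P}_{\mathscr{B}}\psi$; (comma) for nonempty $\Gamma,\Delta$, $\Vdash^{P}_{\mathscr{B}}\Gamma,\Delta$ iff $P=U,V$ for some $U,V$ with $\Vdash^{U}_{\mathscr{B}}\Gamma$, $\Vdash^{V}_{\mathscr{B}}\Delta$ (singleton $[\varphi]$ supported iff $\varphi$ is); (Inf) for nonempty $\Gamma$, $\Gamma\Vdash^{P}_{\mathscr{B}}\varphi$ iff for every $\mathscr{X}\supseteq\mathscr{B}$ and $U$, if $\Vdash^{U}_{\mathscr{X}}\Gamma$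 then $\Vdash^{P,U}_{\mathscr{X}}\varphi$; for empty $\Gamma$ it means $\Vdash^{P}_{\mathscr{B}}\varphi$. Validity: $\Gamma\Vdash\varphi$ iff $\Gamma\Vdash^{\emptyset}_{\mathscr{B}}\varphi$ for every base $\mathscr{B}$. *)

(* Defs.v *)
(* Multisets are represented as lists taken up to Permutation. *)
From Stdlib Require Import List Permutation Arith.
Import ListNotations.

Definition atom := nat.

Inductive formula : Type :=
| Atom : atom -> formula
| Tensor : formula -> formula -> formula
| One : formula
| Lolli : formula -> formula -> formula.

Inductive nd : list formula -> formula -> Prop :=
| nd_perm G G' A : nd G A -> Permutation G G' -> nd G' A
| nd_ax A : nd [A] A
| nd_lolliI G A B : nd (A :: G) B -> nd G (Lolli A B)
| nd_lolliE G D A B : nd G (Lolli A B) -> nd D A -> nd (G ++ D) B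
| nd_oneI : nd [] One
| nd_oneE G D A : nd G A -> nd D One -> nd (G ++ D) A
| nd_tensorI G D A B : nd G A -> nd D B -> nd (G ++ D) (Tensor A B)
| nd_tensorE G D A B C : nd G (Tensor A B) -> nd (A :: B :: D) C -> nd (G ++ D) C.

Definition derivable (G : list formula) (A : formula) : Prop := nd G A.

(* (P_1 |> p_1, ..., P_n |> p_n) => p  is  (premises, p). *)
Definition atomic_rule : Type := (list (list atom * atom) * atom)%type.
Definition base : Type := atomic_rule -> Prop.
Definition ext (B X : base) : Prop := forall r, B r -> X r.

Inductive bderiv (B : base) : list atom -> atom -> Prop :=
| b_ref p : bderiv B [p] p
| b_app (prems : list (list atom * atom)) (p : atom) (Ss : list (list atom)) (S : list atom) :
    B (prems, p) ->
    length Ss = length prems ->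
    (forall i, i < length prems ->
       bderiv B (nth i Ss [] ++ fst (nth i prems ([], 0)))
                (snd (nth i prems ([], 0)))) ->
    Permutation S (concat Ss) ->
    bderiv B S p.

Fixpoint supp (B : base) (P : list atom) (A : formula) : Prop :=
  match A with
  | Atom p => bderiv B P p
  | Tensor A1 A2 =>
      forall (X : base) (U : list atom) (p : atom), ext B X ->
        (forall (Y : base) (V : list atom), ext X Y ->
           (exists V1 V2, Permutation V (V1 ++ V2) /\ supp Y V1 A1 /\ supp Y V2 A2) ->
           bderiv Y (U ++ V) p) ->
        bderiv X (P ++ U) p
  | One =>
      forall (X : base) (U : list atom) (p : atom), ext B X ->
        bderiv X U p -> bderiv X (P ++ U) p
  | Lolli A1 A2 =>
      forall (X : base) (U : list atom), ext B X ->
        supp X U A1 -> supp X (P ++ U) A2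
  end.

Fixpoint supp_ctx (B : base) (P : list atom) (G : list formula) : Prop :=
  match G with
  | [] => False  (* never used: contexts handled here are nonempty *)
  | [A] => supp B P A
  | A :: G' => exists U V, Permutation P (U ++ V) /\ supp B U A /\ supp_ctx B V G'
  end.

Definition inf (B : base) (P : list atom) (G : list formula) (A : formula) : Prop :=
  match G with
  | [] => supp B P A
  | _ => forall (X : base) (U : list atom), ext B X -> supp_ctx X U G -> supp X (P ++ U) A
  end.

Definition valid (G : list formula) (A : formula) : Prop :=
  forall B : base, inf B [] G A.

(* Main.v *)
Require Import Defs.
From Stdlib Require Import List Permutation Arith Lia Cantor ClassicalEpsilon.
Import ListNotations.

Fixpoint code (x : formula) : nat :=
  match x with
  | Atom p => to_nat (0, p)
  | Tensor a b => to_nat (1, to_nat (code a, code b))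
  | One => to_nat (2, 0)
  | Lolli a b => to_nat (3, to_nat (code a, code b))
  end.

Lemma to_nat_inj a b c d : to_nat (a, b) = to_nat (c, d) -> a = c /\ b = d.
Proof.
  intro H. assert (E := f_equal of_nat H). rewrite !cancel_of_to in E.
  inversion E; auto.
Qed.

Arguments to_nat : simpl never.
Lemma code_inj x : forall y, code x = code y -> x = y.
Proof.
  induction x; intros [] H; simpl in H;
  repeat match goal with
  | H : to_nat _ = to_nat _ |- _ => apply to_nat_inj in H; destruct H
  end; try discriminate; subst; auto;
  try lia; f_equal; auto.
Qed.

Definition fl (m : nat) (x : formula) : atom :=
  match x with
  | Atom p => if p <? m then p else m + code x
  | _ => m + code x
  end.

Lemma fl_spec m x : (exists p, x = Atom p /\ p < m /\ fl m x = p) \/ fl m x = m + code x.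
Proof.
  destruct x; simpl; auto.
  destruct (Nat.ltb_spec a m); eauto.
Qed.

Arguments fl : simpl never.
Lemma fl_inj m x y : fl m x = fl m y -> x = y.
Proof.
  intro H.
  destruct (fl_spec m x) as [[p [-> [Hp E1]]] | E1];
  destruct (fl_spec m y) as [[q [-> [Hq E2]]] | E2]; try lia.
  - congruence.
  - apply code_inj; lia.
Qed.

Definition unfl (m : nat) (n : atom) : formula :=
  match excluded_middle_informative (exists x, fl m x = n) with
  | left H => proj1_sig (constructive_indefinite_description _ H)
  | right _ => Atom n
  end.

Lemma unfl_fl m x : unfl m (fl m x) = x.
Proof.
  unfold unfl. destruct excluded_middle_informative as [H|H].
  - destruct constructive_indefinite_description as [y Hy]; simpl.
    apply fl_inj with m; auto.
  - exfalso; eauto.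
Qed.

Inductive N (m : nat) : base :=
| r_tI a b : N m ([([], fl m a); ([], fl m b)], fl m (Tensor a b))
| r_tE a b p : N m ([([], fl m (Tensor a b)); ([fl m a; fl m b], p)], p)
| r_lI a b : N m ([([fl m a], fl m b)], fl m (Lolli a b))
| r_lE a b : N m ([([], fl m (Lolli a b)); ([], fl m a)], fl m b)
| r_oI : N m ([], fl m One)
| r_oE p : N m ([([], fl m One); ([], p)], p).

Lemma bderiv_mono B X S p : ext B X -> bderiv B S p -> bderiv X S p.
Proof.
  intros HX H; induction H.
  - constructor.
  - eapply b_app; eauto.
Qed.

Lemma back m S p : bderiv (N m) S p -> nd (map (unfl m) S) (unfl m p).
Proof.
  intro H; induction H as [p|prems p Ss S HN HL _ IH HP].
  - simpl; apply nd_ax.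
  - assert (HP' : Permutation (map (unfl m) (concat Ss)) (map (unfl m) S))
      by (apply Permutation_map; symmetry; auto).
    refine (nd_perm _ _ _ _ HP'). clear HP' HP.
    inversion HN; subst;
    (destruct Ss as [|S1 [|S2 [|S3 Ss]]]; simpl in HL; try discriminate);
    [ assert (H0 := IH 0 ltac:(simpl; lia)); assert (H1 := IH 1 ltac:(simpl; lia))
    | assert (H0 := IH 0 ltac:(simpl; lia)); assert (H1 := IH 1 ltac:(simpl; lia))
    | assert (H0 := IH 0 ltac:(simpl; lia))
    | assert (H0 := IH 0 ltac:(simpl; lia)); assert (H1 := IH 1 ltac:(simpl; lia))
    | idtac
    | assert (H0 := IH 0 ltac:(simpl; lia)); assert (H1 := IH 1 ltac:(simpl; lia)) ];
    simpl in *; rewrite ?app_nil_r, ?map_app, ?unfl_fl in *;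
    rewrite ?app_nil_r, ?map_app.
    + apply nd_tensorI; auto.
    + eapply nd_tensorE; [exact H0|].
      eapply nd_perm; [exact H1|].
      simpl. rewrite !unfl_fl.
      exact (Permutation_app_comm _ [a;b]).
    + apply nd_lolliI. eapply nd_perm; [exact H0|].
      simpl; rewrite unfl_fl; symmetry. apply Permutation_cons_append.
    + eapply nd_lolliE; eauto.
    + apply nd_oneI.
    + eapply nd_perm; [apply nd_oneE; [exact H1 | exact H0]|].
      apply Permutation_app_comm.
Qed.

Fixpoint maxat (x : formula) : nat :=
  match x with
  | Atom p => p
  | Tensor a b => max (maxat a) (maxat b)
  | One => 0
  | Lolli a b => max (maxat a) (maxat b)
  end.

Lemma fl_atom m p : p < m -> fl m (Atom p) = p.
Proof. intro H; unfold fl. apply Nat.ltb_lt in H; rewrite H; auto. Qed.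

Lemma key m x : maxat x < m -> forall X U, ext (N m) X ->
  (supp X U x <-> bderiv X U (fl m x)).
Proof.
  induction x as [p|a IHa b IHb| |a IHa b IHb]; simpl; intros Hm X U HX.
  - rewrite fl_atom by lia. tauto.
  - assert (Ha : maxat a < m) by lia. assert (Hb : maxat b < m) by lia.
    split.
    + intro H. rewrite <- (app_nil_r U). apply H; [intros r Hr; exact Hr|].
      intros Y V HY [V1 [V2 [HP [H1 H2]]]].
      assert (HY' : ext (N m) Y) by (intros r Hr; auto).
      apply (IHa Ha) in H1; auto. apply (IHb Hb) in H2; auto.
      eapply b_app with (Ss := [V1; V2]); [apply HY'; constructor | reflexivity | | ].
      * intros [|[|i]] Hi; simpl; rewrite ?app_nil_r; auto; simpl in Hi; lia.
      * simpl; rewrite app_nil_r; auto.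
    + intros H X' U' p HX' HH.
      assert (HX'' : ext (N m) X') by (intros r Hr; auto).
      assert (Hd : bderiv X' (U' ++ [fl m a; fl m b]) p).
      { apply HH; [intros r Hr; exact Hr|].
        exists [fl m a], [fl m b]; split; [reflexivity|].
        split; [apply IHa | apply IHb]; auto; constructor. }
      eapply b_app with (Ss := [U; U']); [apply HX''; apply r_tE | reflexivity | | ].
      * intros [|[|i]] Hi; simpl; rewrite ?app_nil_r; auto.
        -- exact (bderiv_mono _ _ _ _ HX' H).
        -- exact Hd.
        -- simpl in Hi; lia.
      * simpl; rewrite app_nil_r; auto.
  - split.
    + intro H. rewrite <- (app_nil_r U). apply H; [intros r Hr; exact Hr|].
      eapply b_app with (Ss := []); [apply HX; constructor | reflexivity | | ].
      * intros i Hi; simpl in Hi; lia.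
      * simpl; auto.
    + intros H X' U' p HX' HH.
      assert (HX'' : ext (N m) X') by (intros r Hr; auto).
      eapply b_app with (Ss := [U; U']); [apply HX''; apply r_oE | reflexivity | | ].
      * intros [|[|i]] Hi; simpl; rewrite ?app_nil_r; auto.
        -- exact (bderiv_mono _ _ _ _ HX' H).
        -- simpl in Hi; lia.
      * simpl; rewrite app_nil_r; auto.
  - assert (Ha : maxat a < m) by lia. assert (Hb : maxat b < m) by lia.
    split.
    + intro H.
      assert (H1 : supp X (U ++ [fl m a]) b).
      { apply H; [intros r Hr; exact Hr|]. apply IHa; auto. constructor. }
      apply IHb in H1; auto.
      eapply b_app with (Ss := [U]); [apply HX; apply r_lI | reflexivity | | ].
      * intros [|i] Hi; simpl; auto; simpl in Hi; lia.
      * simpl; rewrite app_nil_r; auto.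
    + intros H X' U' HX' H1.
      assert (HX'' : ext (N m) X') by (intros r Hr; auto).
      apply IHa in H1; auto. apply IHb; auto.
      eapply b_app with (Ss := [U; U']); [apply HX''; apply r_lE | reflexivity | | ].
      * intros [|[|i]] Hi; simpl; rewrite ?app_nil_r; auto.
        -- exact (bderiv_mono _ _ _ _ HX' H).
        -- exact H1.
        -- simpl in Hi; lia.
      * simpl; rewrite app_nil_r; auto.
Qed.

Lemma ctx_ok m G : G <> [] -> (forall g, In g G -> maxat g < m) ->
  supp_ctx (N m) (map (fl m) G) G.
Proof.
  induction G as [|g G IH]; intros Hne Hs; [congruence|].
  destruct G as [|g' G'].
  - simpl. apply (proj2 (key m g ltac:(apply Hs; simpl; auto) (N m) [fl m g] (fun r Hr => Hr))); constructor.
  - exists [fl m g], (map (fl m) (g' :: G')). split; [reflexivity|]. split.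
    + apply (proj2 (key m g ltac:(apply Hs; simpl; auto) (N m) [fl m g] (fun r Hr => Hr))); constructor.
    + apply IH; [congruence|]. intros h Hh; apply Hs; simpl in *; tauto.
Qed.

Definition mx (G : list formula) (A : formula) : nat :=
  fold_right max (maxat A) (map maxat G).

Lemma mx_A G A : maxat A <= mx G A.
Proof. unfold mx in *; induction G; cbn [fold_right map]; lia. Qed.

Lemma mx_G G A g : In g G -> maxat g <= mx G A.
Proof.
  unfold mx; induction G as [|h G IH]; cbn [fold_right map In]; [tauto|].
  intros [->|H]; [lia|]. specialize (IH H); lia.
Qed.

Theorem theorem4 (G : list formula) (A : formula) :
  valid G A -> derivable G A.
Proof.
  intro Hv. set (m := S (mx G A)). specialize (Hv (N m)).
  assert (HA : maxat A < m) by (pose proof (mx_A G A); unfold m; lia).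
  assert (HG : forall g, In g G -> maxat g < m)
    by (intros g Hg; pose proof (mx_G G A g Hg); unfold m; lia).
  unfold derivable.
  destruct G as [|g G'].
  - simpl in Hv. apply (key m A HA) in Hv; [|intros r Hr; exact Hr].
    apply back in Hv. simpl in Hv. rewrite unfl_fl in Hv. exact Hv.
  - assert (H := Hv (N m) (map (fl m) (g :: G')) (fun r Hr => Hr)
                  (ctx_ok m (g :: G') ltac:(congruence) HG)).
    apply (key m A HA) in H; [|intros r Hr; exact Hr].
    apply back in H. rewrite unfl_fl, app_nil_l, map_map in H.
    rewrite (map_ext _ (fun x => x) (unfl_fl m)), map_id in H. exact H.
Qed.
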